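(* Let $L$ be a family of lattice-closed logics such that every $L$-definable language has a syntactic algebra. The following statements are equivalent: (1) $L$ is varietal; (2) for every $L$-definable language $K\subseteq\mathbb{M}\Sigma$, the syntactic algebra $\mathrm{Syn}(K)$ is $L$-definable.
   Context: Fix a set $\Xi$ of sorts; $\mathsf{Pos}^\Xi$: $\Xi$-sorted families of partial orders with sort-wise monotone maps. $\mathbb{M}$ is a monad on $\mathsf{Pos}^\Xi$ ($\mathrm{flat},\mathrm{sing}$) preserving injective, surjective, bijective functions and preimages and using the standard ordering. $\mathbb{M}$-algebras $\langle A,\pi\rangle$: $\pi\circ\mathbb{M}\pi=\pi\circ\mathrm{flat}$, $\pi\circ\mathrm{sing}=\mathrm{id}$. Finitary: sort-wise finite and finitely generated. Alphabet: finite unordered $\Sigma$; language: $K\subseteq\mathbb{M}_\xi\Sigma$; $\mathfrak{A}$ recognises $K$ if $K=\varphi^{-1}[P]$ for a morphism $\varphi:\mathbb{M}\Sigma\to\mathfrak{A}$ and upwards closed $P$. Contexts with hole of sort $\zeta$: $p\in\mathbb{M}(\Sigma+\{\Box\})$, $p[s]$ the image under the algebra morphism extending $\Box\mapsto s$, $c\mapsto\mathrm{sing}(c)$; $p^{-1}[K]=\{s:p[s]\in K\}$. Syntactic congruence $s\preceq_K t$ ($s,t$ of sort $\zeta$) iff $p[s]\in K\Rightarrow p[t]\in K$ for all contexts $p\in\mathbb{M}_\xi(\Sigma+\{\Box\})$ with hole of sort $\zeta$; $K$ has a syntactic algebra if $\preceq_K$ is a congruence ordering ($\mathbb{M}q(s)\leq\mathbb{M}q(t)\Rightarrow\pi(s)\preceq_K\pi(t)$,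 $q$ quotient map) with sort-wise finite quotient $\mathrm{Syn}(K)=\mathbb{M}\Sigma/{\preceq_K}$. Variety of languages: family of classes of languages over each alphabet closed under finite unions and intersections, inverse morphisms $\psi^{-1}[K]$ ($\psi:\mathbb{M}\Sigma\to\mathbb{M}\Gamma$ algebra morphisms), derivatives. A logic: $\Xi$-sorted formulae and models with satisfaction; lattice closed if definable classes of each sort are closed under finite unions and intersections. A family of logics $L$ assigns to each alphabet $\Sigma$ a logic $L[\Sigma]$ with models $\mathbb{M}\Sigma$, and to $f:\Sigma\to\Gamma$ a sort-preserving $\lambda_f:L[\Gamma]\to L[\Sigma]$ with $s\models\lambda_f(\varphi)\iff\mathbb{M}f(s)\models\varphi$. $K\subseteq\mathbb{M}_\xi\Sigma$ is $L$-definable if it equals $\{s:s\models\varphi\}$ for some $\varphi\in L_\xi[\Sigma]$; for a finite ordered $C$, $K\subseteq\mathbb{M}C$ is $L$-definable if its preimage under $\mathbb{M}\iota$ ($\iota$ the identity from $C$ with trivial order to $C$) is. $L$ is varietal if the $L$-definable languages form a variety of languages. A finite $C\subseteq A$ is $L$-definably embedded if $\pi^{-1}(\uparrow a)\cap\mathbb{M}C$ is $L$-definable for all $a\in A$; $\mathfrak{A}$ is $L$-definable if finitary and all finite subsets are $L$-definably embedded. *)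

(* Defs.v *)
From Stdlib Require Import List ProofIrrelevance FunctionalExtensionality PropExtensionality.
Set Implicit Arguments.
Unset Strict Implicit.

Section PosDefs.
Variable Xi : Type.

Record PosF := {
  car :> Xi -> Type;
  le : forall x, car x -> car x -> Prop;
  le_refl : forall x a, @le x a a;
  le_trans : forall x a b c, @le x a b -> @le x b c -> @le x a c;
  le_antisym : forall x a b, @le x a b -> @le x b a -> a = b }.
Arguments le {p x}.

Record Hom (A B : PosF) := {
  hmap :> forall x, car A x -> car B x;
  hmono : forall x (a b : car A x), le a b -> le (hmap a) (hmap b) }.

Definition idH (A : PosF) : Hom A A :=
  {| hmap := fun x a => a; hmono := fun x a b h => h |}.

Definition compH (A B C : PosF) (g : Hom B C) (f : Hom A B) : Hom A C :=
  {| hmap := fun x a => g x (f x a);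
     hmono := fun x a b h => hmono g (hmono f h) |}.

Definition disc (X : Xi -> Type) : PosF.
Proof.
  refine {| car := X; le := fun x a b => a = b |}.
  - reflexivity.
  - intros; subst; reflexivity.
  - intros; assumption.
Defined.

Definition discHomTo (X : Xi -> Type) (A : PosF) (f : forall x, X x -> car A x)
  : Hom (disc X) A.
Proof.
  refine (@Build_Hom (disc X) A f _).
  intros x a b h; simpl in h; subst; apply le_refl.
Defined.

Definition discHom (X Y : Xi -> Type) (f : forall x, X x -> Y x)
  : Hom (disc X) (disc Y) := discHomTo (A := disc Y) f.

Definition sub (A : PosF) (P : forall x, car A x -> Prop) : PosF.
Proof.
  refine {| car := fun x => {a : car A x | P x a};
            le := fun x a b => le (proj1_sig a) (proj1_sig b) |}.
  - intros; apply le_refl.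
  - intros x a b c; apply le_trans.
  - intros x [a Ha] [b Hb] h1 h2; simpl in *.
    assert (a = b) by (apply le_antisym; assumption). subst.
    f_equal; apply proof_irrelevance.
Defined.

Definition incl (A : PosF) (P : forall x, car A x -> Prop) : Hom (sub P) A :=
  @Build_Hom (sub P) A (fun x (a : car (sub P) x) => proj1_sig a) (fun x a b h => h).

Definition prodP (A B : PosF) : PosF.
Proof.
  refine {| car := fun x => (car A x * car B x)%type;
            le := fun x p q => le (fst p) (fst q) /\ le (snd p) (snd q) |}.
  - intros; split; apply le_refl.
  - intros x a b c [h1 h2] [h3 h4]; split; eapply le_trans; eassumption.
  - intros x [a1 a2] [b1 b2] [h1 h2] [h3 h4]; simpl in *; f_equal; apply le_antisym; assumption.
Defined.

Definition fstH (A B : PosF) : Hom (prodP A B) A :=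
  @Build_Hom (prodP A B) A (fun x (p : car (prodP A B) x) => fst p) (fun x p q h => proj1 h).
Definition sndH (A B : PosF) : Hom (prodP A B) B :=
  @Build_Hom (prodP A B) B (fun x (p : car (prodP A B) x) => snd p) (fun x p q h => proj2 h).

Definition LeObj (A : PosF) : PosF :=
  sub (A := prodP A A) (fun x p => le (fst p) (snd p)).
Definition proj0 (A : PosF) : Hom (LeObj A) A := compH (@fstH A A) (incl _).
Definition proj1 (A : PosF) : Hom (LeObj A) A := compH (@sndH A A) (incl _).

Definition finiteF (X : Xi -> Type) : Prop :=
  exists l : list {x : Xi & X x}, forall x (a : X x), In (existT _ x a) l.
Definition sortfin (A : PosF) : Prop :=
  forall x, exists l : list (car A x), forall a, In a l.

Record Monad := {
  M : PosF -> PosF;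
  Mmap : forall A B, Hom A B -> Hom (M A) (M B);
  flat : forall A, Hom (M (M A)) (M A);
  sing : forall A, Hom A (M A);
  Mmap_id : forall A x (s : car (M A) x), Mmap (idH A) x s = s;
  Mmap_comp : forall A B C (f : Hom A B) (g : Hom B C) x (s : car (M A) x),
      Mmap (compH g f) x s = Mmap g x (Mmap f x s);
  sing_nat : forall A B (f : Hom A B) x (a : car A x),
      sing B x (f x a) = Mmap f x (sing A x a);
  flat_nat : forall A B (f : Hom A B) x (s : car (M (M A)) x),
      flat B x (Mmap (Mmap f) x s) = Mmap f x (flat A x s);
  flat_sing : forall A x (s : car (M A) x), flat A x (sing (M A) x s) = s;
  flat_Msing : forall A x (s : car (M A) x), flat A x (Mmap (sing A) x s) = s;
  flat_flat : forall A x (s : car (M (M (M A))) x),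
      flat A x (flat (M A) x s) = flat A x (Mmap (flat A) x s) }.
Arguments Mmap m {A B}.
Arguments flat m {A}.
Arguments sing m {A}.

Section MonadDefs.
Variable m : Monad.
Local Notation MM := (M m).
Local Notation Mm := (Mmap m).

Definition injectiveH (A B : PosF) (f : Hom A B) : Prop :=
  forall x (a b : car A x), f x a = f x b -> a = b.
Definition surjectiveH (A B : PosF) (f : Hom A B) : Prop :=
  forall x (b : car B x), exists a, f x a = b.

Definition preserves_injective : Prop :=
  forall A B (f : Hom A B), injectiveH f -> injectiveH (Mm f).
Definition preserves_surjective : Prop :=
  forall A B (f : Hom A B), surjectiveH f -> surjectiveH (Mm f).
Definition preserves_bijective : Prop :=
  forall A B (f : Hom A B), injectiveH f -> surjectiveH f ->
    injectiveH (Mm f) /\ surjectiveH (Mm f).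
(* M (f^-1[C]) = (Mf)^-1[MC] *)
Definition preserves_preimages : Prop :=
  forall A B (f : Hom A B) (P : forall x, car B x -> Prop) x (s : car (MM A) x),
    (exists u : car (MM (sub P)) x, Mm (incl P) x u = Mm f x s) <->
    (exists v : car (MM (sub (A := A) (fun y a => P y (f y a)))) x,
        Mm (incl _) x v = s).
Definition uses_standard_ordering : Prop :=
  forall A x (s t : car (MM A) x),
    le s t <-> exists u : car (MM (LeObj A)) x,
                 Mm (proj0 A) x u = s /\ Mm (proj1 A) x u = t.

Definition monad_assumptions : Prop :=
  preserves_injective /\ preserves_surjective /\ preserves_bijective /\
  preserves_preimages /\ uses_standard_ordering.

Record Alg := {
  acarr :> PosF;
  api : Hom (MM acarr) acarr;
  api_assoc : forall x (s : car (MM (MM acarr)) x),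
      api x (Mm api x s) = api x (flat m x s);
  api_unit : forall x (a : car acarr x), api x (sing m x a) = a }.

Record Alphabet := { acar :> Xi -> Type; afin : finiteF acar }.

Definition MS (S : Alphabet) : PosF := MM (disc S).
Definition language (S : Alphabet) x := car (MS S) x -> Prop.

(* the alphabet S + {hole of sort z} *)
Definition holeAlph (S : Alphabet) (z : Xi) : Alphabet.
Proof.
  refine {| acar := fun x => (S x + (x = z))%type |}.
  destruct (afin S) as [l Hl].
  exists (map (fun p => existT (fun x => (S x + (x = z))%type) (projT1 p) (inl (projT2 p))) l
          ++ (existT (fun x => (S x + (x = z))%type) z (inr eq_refl)) :: nil).
  intros x [a|e]; apply in_or_app.
  - left. exact (in_map (fun p => existT (fun x => (S x + (x = z))%type) (projT1 p) (inl (projT2 p))) l (existT _ x a) (Hl x a)).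
  - right. subst. left. reflexivity.
Defined.

(* substitution of s for the hole: the algebra morphism M(S+{hole}) -> MS
   extending hole |-> s, c |-> sing c *)
Definition subst_fun (S : Alphabet) (z : Xi) (s : car (MS S) z)
  : forall x, holeAlph S z x -> car (MS S) x :=
  fun x c => match c with
             | inl a => sing m x (a : car (disc S) x)
             | inr e => eq_rect z (car (MS S)) s x (eq_sym e)
             end.

Definition plug (S : Alphabet) (z : Xi) x (p : car (MS (holeAlph S z)) x)
  (s : car (MS S) z) : car (MS S) x :=
  flat m x (Mm (discHomTo (A := MS S) (subst_fun s)) x p).

Definition synle (S : Alphabet) x (K : language S x) z (s t : car (MS S) z) : Prop :=
  forall p : car (MS (holeAlph S z)) x, K (plug p s) -> K (plug p t).

Lemma synle_refl S x (K : language S x) z s : @synle S x K z s s.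
Proof. intros p h; exact h. Qed.
Lemma synle_trans S x (K : language S x) z s t u :
  @synle S x K z s t -> synle K t u -> synle K s u.
Proof. intros h1 h2 p h; apply h2, h1, h. Qed.

End MonadDefs.

Section Quot.
Variable A : PosF.
Variable R : forall x, car A x -> car A x -> Prop.
Arguments R : clear implicits.
Hypothesis Rrefl : forall x a, R x a a.
Hypothesis Rtrans : forall x a b c, R x a b -> R x b c -> R x a c.

Definition qclass x (a : car A x) : car A x -> Prop := fun b => R x a b /\ R x b a.

Definition quot : PosF.
Proof.
  refine {| car := fun x => {P : car A x -> Prop | exists a, P = qclass a};
            le := fun x P Q => exists a b, proj1_sig P a /\ proj1_sig Q b /\ R x a b |}.
  - intros x [P [a Ha]]; exists a, a; subst; simpl; unfold qclass; auto.
  - intros x [P [a Ha]] [Q [b Hb]] [U [c Hc]] [a1 [b1 [h1 [h2 h3]]]] [b2 [c2 [h4 [h5 h6]]]];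
      subst; simpl in *; unfold qclass in *.
    exists a1, c2; repeat split; try tauto.
    apply Rtrans with b1; [assumption|]. apply Rtrans with b; [tauto|].
    apply Rtrans with b2; tauto.
  - intros x [P HP] [Q HQ] [a1 [b1 [h1 [h2 h3]]]] [b2 [a2 [h4 [h5 h6]]]]; simpl in *.
    assert (E : P = Q).
    { destruct HP as [a Ha]; destruct HQ as [b Hb]; subst; unfold qclass in *.
      assert (Rab : R x a b) by
        (apply Rtrans with a1; [tauto|]; apply Rtrans with b1; [tauto|tauto]).
      assert (Rba : R x b a) by
        (apply Rtrans with b2; [tauto|]; apply Rtrans with a2; [tauto|tauto]).
      apply functional_extensionality; intro c; apply propositional_extensionality;
      split; intros [h7 h8]; split; eauto. }
    subst Q. f_equal. apply proof_irrelevance.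
Defined.

Definition qmap (Hle : forall x (a b : car A x), le a b -> R x a b) : Hom A quot.
Proof.
  refine (@Build_Hom A quot (fun x a => exist (fun P => exists a0, P = qclass a0) (qclass a) (ex_intro _ a eq_refl)) _).
  intros x a b h. exists a, b; simpl; unfold qclass; auto.
Defined.
End Quot.

Section Logics.
Variable m : Monad.

Record LogicFam := {
  Form : Alphabet -> Xi -> Type;
  sat : forall (S : Alphabet) x, car (MS m S) x -> Form S x -> Prop;
  lam : forall (S G : Alphabet), (forall x, S x -> G x) -> forall x, Form G x -> Form S x;
  lam_sat : forall (S G : Alphabet) (f : forall x, S x -> G x) x
      (s : car (MS m S) x) (phi : Form G x),
      sat s (lam f phi) <-> sat (Mmap m (discHom f) x s) phi }.

Variable L : LogicFam.

Definition Ldef (S : Alphabet) x (K : language m S x) : Prop :=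
  exists phi : Form L S x, forall s, K s <-> sat s phi.

Definition lattice_closed : Prop :=
  forall (S : Alphabet) x,
    Ldef (x := x) (S := S) (fun _ => False) /\ Ldef (x := x) (S := S) (fun _ => True) /\
    (forall K1 K2 : language m S x, Ldef K1 -> Ldef K2 -> Ldef (fun s => K1 s \/ K2 s)) /\
    (forall K1 K2 : language m S x, Ldef K1 -> Ldef K2 -> Ldef (fun s => K1 s /\ K2 s)).

Definition free_morphism (S G : Alphabet) (psi : Hom (MS m S) (MS m G)) : Prop :=
  forall x (s : car (M m (MS m S)) x), psi x (flat m x s) = flat m x (Mmap m psi x s).

Definition variety (V : forall (S : Alphabet) x, language m S x -> Prop) : Prop :=
  (forall S x, V S x (fun _ => False)) /\
  (forall S x, V S x (fun _ => True)) /\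
  (forall S x (K1 K2 : language m S x), V S x K1 -> V S x K2 -> V S x (fun s => K1 s \/ K2 s)) /\
  (forall S x (K1 K2 : language m S x), V S x K1 -> V S x K2 -> V S x (fun s => K1 s /\ K2 s)) /\
  (forall (S G : Alphabet) (psi : Hom (MS m S) (MS m G)), free_morphism psi ->
     forall x (K : language m G x), V G x K -> V S x (fun s => K (psi x s))) /\
  (forall S x (K : language m S x) z (p : car (MS m (holeAlph S z)) x),
     V S x K -> V S z (fun s => K (plug p s))).

Definition varietal : Prop := variety Ldef.

(* K has a syntactic algebra: the syntactic preorder is a congruence ordering
   with sort-wise finite quotient *)
Definition has_syntactic_algebra (S : Alphabet) x (K : language m S x) : Prop :=
  exists Hle : (forall z (s t : car (MS m S) z), le s t -> synle K s t),
    (forall z (s t : car (M m (MS m S)) z),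
        le (Mmap m (qmap (@synle_refl m S x K) (@synle_trans m S x K) Hle) z s)
           (Mmap m (qmap (@synle_refl m S x K) (@synle_trans m S x K) Hle) z t) ->
        synle K (flat m z s) (flat m z t)) /\
    sortfin (quot (@synle_refl m S x K) (@synle_trans m S x K)).

(* (B, h) realises Syn(K): h : MS -> B is a surjective algebra morphism whose
   kernel ordering is the syntactic preorder *)
Definition is_syntactic_algebra (S : Alphabet) x (K : language m S x)
  (B : Alg m) (h : Hom (MS m S) B) : Prop :=
  (forall z (s : car (M m (MS m S)) z), h z (flat m z s) = api B z (Mmap m h z s)) /\
  surjectiveH h /\
  (forall z (s t : car (MS m S) z), le (h z s) (h z t) <-> synle K s t).

(* L-definable algebras.  A finite subset C of B is given as the image of a
   sort-wise injective map e from an alphabet. *)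
Definition finitely_generated (B : Alg m) : Prop :=
  exists (S : Alphabet) (e : forall x, S x -> car B x),
    forall x (a : car B x), exists w : car (MS m S) x,
      api B x (Mmap m (discHomTo e) x w) = a.

Definition finitary (B : Alg m) : Prop := sortfin B /\ finitely_generated B.

Definition L_definably_embedded (B : Alg m) (S : Alphabet) (e : forall x, S x -> car B x) : Prop :=
  forall x (a : car B x),
    Ldef (S := S) (x := x) (fun w => le a (api B x (Mmap m (discHomTo e) x w))).

Definition L_definable_alg (B : Alg m) : Prop :=
  finitary B /\
  forall (S : Alphabet) (e : forall x, S x -> car B x),
    (forall x (a b : S x), e x a = e x b -> a = b) -> L_definably_embedded e.

End Logics.
End PosDefs.

Arguments is_syntactic_algebra {Xi m S x} K B h.
Arguments L_definable_alg {Xi m} L B.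
Arguments Ldef {Xi m} L {S x} K.
Arguments has_syntactic_algebra {Xi m S x} K.

(* Main.v *)
Require Import Defs.
From Stdlib Require Import List Classical ClassicalEpsilon ProofIrrelevance FunctionalExtensionality PropExtensionality.
Set Implicit Arguments.

Section Gen.
Variable Xi : Type.
Variable m : Monad Xi.

Lemma Hom_ext (A B : PosF Xi) (f g : Hom A B) :
  (forall x a, f x a = g x a) -> f = g.
Proof.
  destruct f as [f hf], g as [g hg]; simpl; intro H.
  assert (f = g) by (apply functional_extensionality_dep; intro x;
                     apply functional_extensionality; apply H).
  subst; f_equal; apply proof_irrelevance.
Qed.

Lemma Mmap_ext (A B : PosF Xi) (f g : Hom A B) x s :
  (forall x a, f x a = g x a) -> Mmap m f x s = Mmap m g x s.
Proof. intro H; rewrite (Hom_ext f g H); reflexivity. Qed.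

Lemma Mmap_comp' (A B C : PosF Xi) (f : Hom A B) (g : Hom B C) x s :
  Mmap m g x (Mmap m f x s) = Mmap m (compH g f) x s.
Proof. symmetry; apply Mmap_comp. Qed.

Lemma hom_gen (S : Alphabet Xi) (B : Alg m) (h : Hom (MS m S) B)
  (Hh : forall z (s : car (M m (MS m S)) z), h z (flat m _ z s) = api B z (Mmap m h z s))
  x (w : car (MS m S) x) :
  h x w = api B x (Mmap m (discHomTo (fun z c => h z (sing m (disc S) z c))) x w).
Proof.
  rewrite <- (@flat_Msing _ m (disc S) x w) at 1.
  rewrite Hh, Mmap_comp'. f_equal. apply Mmap_ext. reflexivity.
Qed.

Variable L : LogicFam m.

Lemma Ldef_ext (S : Alphabet Xi) x (K1 K2 : language m S x) :
  (forall s, K1 s <-> K2 s) -> Ldef L K1 -> Ldef L K2.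
Proof.
  intros H [phi Hp]; exists phi; intro s; rewrite <- H; apply Hp.
Qed.


Definition imgAlph (S : Alphabet Xi) (B : PosF Xi) (e : forall x, S x -> car B x) : Alphabet Xi.
Proof.
  refine {| acar := fun x => {b : car B x | exists c, e x c = b} |}.
  destruct (afin S) as [l Hl].
  exists (map (fun p => existT (fun x => {b : car B x | exists c, e x c = b}) (projT1 p)
                 (exist _ (e _ (projT2 p)) (ex_intro _ (projT2 p) eq_refl))) l).
  intros x [b Hb].
  assert (Hb' := Hb). destruct Hb' as [c Hc]. subst b.
  rewrite (proof_irrelevance _ Hb (ex_intro _ c eq_refl)).
  exact (in_map (fun p => existT (fun x => {b : car B x | exists c, e x c = b}) (projT1 p)
                 (exist _ (e _ (projT2 p)) (ex_intro _ (projT2 p) eq_refl))) l (existT _ x c) (Hl x c)).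
Defined.

Lemma image_def (B : Alg m) (HB : L_definable_alg L B) (S : Alphabet Xi)
  (e : forall x, S x -> car B x) x (a : car B x) :
  Ldef L (S := S) (x := x) (fun w => le a (api B x (Mmap m (discHomTo e) x w))).
Proof.
  destruct HB as [_ HB].
  set (C := @imgAlph S (acarr B) e).
  set (eC := fun x (c : C x) => proj1_sig c).
  assert (Hinj : forall x (a b : C x), eC x a = eC x b -> a = b).
  { intros y [a1 h1] [b1 h2]; unfold eC; simpl; intro E; subst.
    f_equal; apply proof_irrelevance. }
  destruct (HB C eC Hinj x a) as [phi Hphi].
  set (q := fun x (c : S x) => (exist _ (e x c) (ex_intro _ c eq_refl) : C x)).
  exists (lam q phi). intro w. rewrite lam_sat, <- Hphi.
  rewrite Mmap_comp'. replace (Mmap m (compH (discHomTo eC) (discHom q)) x w)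
    with (Mmap m (discHomTo e) x w). reflexivity.
  apply Mmap_ext. reflexivity.
Qed.

Hypothesis Hlat : lattice_closed L.

Lemma union_def (B : Alg m) (HB : L_definable_alg L B) (S : Alphabet Xi)
  (e : forall x, S x -> car B x) x (Q : car B x -> Prop) :
  Ldef L (S := S) (x := x)
    (fun w => exists a, Q a /\ le a (api B x (Mmap m (discHomTo e) x w))).
Proof.
  pose proof HB as [[Hfin _] _]. destruct (Hfin x) as [l Hl].
  destruct (Hlat S x) as [H0 [_ [HU _]]].
  assert (Hind : forall l, Ldef L (S := S) (x := x)
    (fun w => exists a, In a l /\ Q a /\ le a (api B x (Mmap m (discHomTo e) x w)))).
  { induction l0 as [|a0 l0 IH].
    - eapply Ldef_ext; [|exact H0]. intro s; simpl; split; [tauto|].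
      intros [a [[] _]].
    - destruct (classic (Q a0)) as [Hq|Hq].
      + eapply Ldef_ext; [|exact (HU _ _ (@image_def B HB S e x a0) IH)].
        intro s; split.
        * intros [R|[a [Ha R]]]; [exists a0; simpl; tauto|exists a; simpl; tauto].
        * intros [a [[Ha|Ha] [Hqa R]]]; [subst; left; exact R|right; exists a; tauto].
      + eapply Ldef_ext; [|exact IH]. intro s; split.
        * intros [a [Ha R]]; exists a; simpl; tauto.
        * intros [a [[Ha|Ha] R]]; [subst; tauto|]. exists a; tauto. }
  eapply Ldef_ext; [|exact (Hind l)]. intro s; split.
  - intros [a Ha]; exists a; tauto.
  - intros [a Ha]; exists a; split; [apply Hl|tauto].
Qed.

Section SynLemmas.
Variables (S : Alphabet Xi) (x : Xi) (K : language m S x) (B : Alg m) (h : Hom (MS m S) B).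
Hypothesis Hs : is_syntactic_algebra K B h.

Lemma plug_hole (s : car (MS m S) x) :
  plug (sing m (disc (holeAlph S x)) x (inr eq_refl)) s = s.
Proof.
  unfold plug. rewrite <- sing_nat. simpl. apply flat_sing.
Qed.

Lemma K_up s t : K s -> synle K s t -> K t.
Proof.
  intros Hk Hst. rewrite <- plug_hole. apply Hst. rewrite plug_hole. exact Hk.
Qed.

Lemma h_le z (s t : car (MS m S) z) : le (h z s) (h z t) -> synle K s t.
Proof. destruct Hs as [_ [_ H]]. apply H. Qed.

Lemma h_gen z (w : car (MS m S) z) :
  h z w = api B z (Mmap m (discHomTo (fun z c => h z (sing m (disc S) z c))) z w).
Proof. destruct Hs as [H _]. apply hom_gen. exact H. Qed.

Lemma h_surj z (b : car B z) : exists s, h z s = b.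
Proof. destruct Hs as [_ [H _]]. apply H. Qed.

Lemma h_eq z (s t : car (MS m S) z) : h z s = h z t -> synle K s t /\ synle K t s.
Proof.
  intro E; split; apply h_le; rewrite E; apply le_refl.
Qed.

End SynLemmas.

Lemma sig_eq' (A : Type) (P : A -> Prop) (u v : sig P) : proj1_sig u = proj1_sig v -> u = v.
Proof. destruct u, v; simpl; intro; subst; f_equal; apply proof_irrelevance. Qed.

Section SynCon.
Variables (S : Alphabet Xi) (x : Xi) (K : language m S x).
Variable Hle : forall z (s t : car (MS m S) z), le s t -> synle K s t.
Hypothesis Hcong : forall z (s t : car (M m (MS m S)) z),
        le (Mmap m (qmap (@synle_refl _ m S x K) (@synle_trans _ m S x K) Hle) z s)
           (Mmap m (qmap (@synle_refl _ m S x K) (@synle_trans _ m S x K) Hle) z t) ->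
        synle K (flat m _ z s) (flat m _ z t).
Hypothesis Hsurj : preserves_surjective m.

Let Q := quot (@synle_refl _ m S x K) (@synle_trans _ m S x K).
Let qm := qmap (@synle_refl _ m S x K) (@synle_trans _ m S x K) Hle.

Lemma qm_surj : surjectiveH qm.
Proof.
  intros z [P HP]. destruct HP as [a Ha]. exists a. apply sig_eq'. simpl. auto.
Qed.

Lemma qm_eq z (s t : car (MS m S) z) : synle K s t -> synle K t s -> qm z s = qm z t.
Proof.
  intros H1 H2. apply sig_eq'. simpl. unfold qclass.
  apply functional_extensionality; intro b; apply propositional_extensionality.
  split; intros [h1 h2]; split; eauto using synle_trans.
Qed.

Definition apif z (u : car (M m Q) z) : car Q z :=
  qm z (flat m _ z (proj1_sig (constructive_indefinite_description _ (Hsurj qm_surj z u)))).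

Lemma api_spec z (s : car (M m (MS m S)) z) : apif z (Mmap m qm z s) = qm z (flat m _ z s).
Proof.
  unfold apif. destruct (constructive_indefinite_description _ _) as [s' Hs']. simpl.
  apply qm_eq; apply Hcong; fold qm; rewrite Hs'; apply le_refl.
Qed.

Lemma apif_mono z (u v : car (M m Q) z) : le u v -> le (apif z u) (apif z v).
Proof.
  destruct (Hsurj qm_surj z u) as [s Hs]; destruct (Hsurj qm_surj z v) as [t Ht]; subst.
  intro H. rewrite !api_spec.
  exists (flat m _ z s), (flat m _ z t). simpl. unfold qclass.
  split; [split; apply synle_refl|]. split; [split; apply synle_refl|]. apply Hcong. exact H.
Qed.

Definition apiH : Hom (M m Q) Q := @Build_Hom _ (M m Q) Q apif apif_mono.

Lemma apiH_assoc z (U : car (M m (M m Q)) z) :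
  apiH z (Mmap m apiH z U) = apiH z (flat m Q z U).
Proof.
  destruct (Hsurj (Hsurj qm_surj) z U) as [SS HS]; subst U.
  rewrite Mmap_comp'.
  rewrite (Mmap_ext (compH apiH (Mmap m qm)) (compH qm (flat m _))).
  2:{ intros y a. simpl. apply api_spec. }
  rewrite <- Mmap_comp'. simpl. rewrite api_spec.
  rewrite flat_nat, api_spec, flat_flat. reflexivity.
Qed.

Lemma apiH_unit z (a : car Q z) : apiH z (sing m Q z a) = a.
Proof.
  destruct (qm_surj a) as [s Hs]; subst a.
  rewrite sing_nat. simpl. rewrite api_spec, flat_sing. reflexivity.
Qed.

Definition SynAlg : Alg m := Build_Alg apiH_assoc apiH_unit.

Lemma SynAlg_syn : is_syntactic_algebra K SynAlg qm.
Proof.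
  split; [|split].
  - intros z s. simpl. symmetry. apply api_spec.
  - exact qm_surj.
  - intros z s t; split.
    + intros [a [b [[h1 h2] [[h3 h4] h5]]]]. simpl in *.
      eapply synle_trans; [exact h1|]. eapply synle_trans; [exact h5|]. exact h4.
    + intro H. exists s, t. simpl. unfold qclass. repeat split; try apply synle_refl. exact H.
Qed.

End SynCon.

Lemma inv_gen (S G : Alphabet Xi) (psi : Hom (MS m S) (MS m G)) (Hpsi : free_morphism psi)
  (B : Alg m) (h : Hom (MS m G) B)
  (Hh : forall z (s : car (M m (MS m G)) z), h z (flat m _ z s) = api B z (Mmap m h z s))
  x (w : car (MS m S) x) :
  h x (psi x w) = api B x (Mmap m (discHomTo (fun z c => h z (psi z (sing m (disc S) z c)))) x w).
Proof.
  apply (@hom_gen S B (compH h psi)).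
  intros z s. simpl. rewrite Hpsi, Hh, Mmap_comp'. reflexivity.
Qed.

Lemma syn_sortfin (S : Alphabet Xi) x (K : language m S x) (B : Alg m) (h : Hom (MS m S) B)
  (Hs : is_syntactic_algebra K B h) (HK : has_syntactic_algebra K) : sortfin B.
Proof.
  destruct HK as [Hle [_ Hfin]].
  intro z. destruct (Hfin z) as [l Hl].
  set (rep := fun (c : car (quot (@synle_refl _ m S x K) (@synle_trans _ m S x K)) z) =>
                proj1_sig (constructive_indefinite_description _ (proj2_sig c))).
  exists (map (fun c => h z (rep c)) l).
  intro b. destruct (h_surj Hs _ b) as [v Hv]; subst b.
  set (c := qmap (@synle_refl _ m S x K) (@synle_trans _ m S x K) Hle z v).
  assert (E : h z (rep c) = h z v).
  { unfold rep. destruct (constructive_indefinite_description _ _) as [r Hr]. simpl.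
    simpl in Hr. assert (Hq := f_equal (fun P => P r) Hr). simpl in Hq.
    assert (Hvr : qclass (synle K) v r) by (rewrite Hq; split; apply synle_refl).
    destruct Hvr as [h1 h2].
    destruct Hs as [_ [_ Hiff]].
    apply le_antisym; apply Hiff; assumption. }
  rewrite <- E. apply (in_map (fun c => h z (rep c))). apply Hl.
Qed.

End Gen.

Theorem theorem9p9 (Xi : Type) (m : Monad Xi) (Hm : monad_assumptions m)
  (L : LogicFam m) (Hlat : lattice_closed L)
  (Hsyn : forall (S : Alphabet Xi) (x : Xi) (K : language m S x),
            Ldef L K -> has_syntactic_algebra K) :
  varietal L <->
  (forall (S : Alphabet Xi) (x : Xi) (K : language m S x), Ldef L K ->
     forall (B : Alg m) (h : Hom (MS m S) B),
       is_syntactic_algebra K B h -> L_definable_alg L B).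
Proof.
  destruct Hm as [_ [Hsurj _]].
  split.
  - intros Hvar S x K HK B h Hs.
    destruct Hvar as [V0 [V1 [VU [VI [Vinv Vder]]]]].
    assert (Hfin : sortfin B) by exact (syn_sortfin Hs (Hsyn S x K HK)).
    split.
    + split; [exact Hfin|]. exists S, (fun z c => h z (sing m (disc S) z c)).
      intros z a. destruct (h_surj Hs _ a) as [w E]. subst a. exists w.
      symmetry. apply (h_gen Hs).
    + intros S' e _ x0 a.
      assert (HD : Ldef L (S:=S) (x:=x0) (fun v => le a (h x0 v))).
      { destruct (h_surj Hs _ a) as [v0 Hv0].
        destruct (Hfin x0) as [l Hl].
        assert (Hc : forall l, exists D : language m S x0, Ldef L D /\
                  (forall v, le a (h x0 v) -> D v) /\
                  (forall v, D v -> forall b, In b l -> ~ le a b -> h x0 v <> b)).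
        { induction l0 as [|b l0 [D [HD1 [HD2 HD3]]]].
          - exists (fun _ => True). split; [apply V1|]. split; [auto|]. intros v _ b [].
          - destruct (classic (le a b)) as [Hab|Hab].
            + exists D. split; [exact HD1|]. split; [exact HD2|].
              intros v Hv b' [E|Hin] Hn; [subst; contradiction|]. exact (HD3 v Hv b' Hin Hn).
            + destruct (h_surj Hs _ b) as [vb Hvb].
              assert (Hns : ~ synle K v0 vb).
              { intro Hs'. apply Hab. rewrite <- Hv0, <- Hvb.
                pose proof Hs as [_ [_ Hiff]]. apply Hiff. exact Hs'. }
              destruct (not_all_ex_not _ _ Hns) as [p Hp].
              apply imply_to_and in Hp. destruct Hp as [Hp1 Hp2].
              exists (fun v => D v /\ K (plug p v)). split.
              { apply VI; [exact HD1|]. apply Vder. exact HK. }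
              split.
              { intros v Hv. split; [apply HD2; exact Hv|].
                apply (h_le Hs _ v0 v); [rewrite Hv0; exact Hv|exact Hp1]. }
              intros v [Hv1 Hv2] b' [E|Hin] Hn.
              * subst b'. intro E. apply Hp2.
                apply (h_le Hs _ v vb); [rewrite E, Hvb; apply le_refl|exact Hv2].
              * exact (HD3 v Hv1 b' Hin Hn). }
        destruct (Hc l) as [D [HD1 [HD2 HD3]]].
        eapply Ldef_ext; [|exact HD1]. intro v; split; [|apply HD2].
        intro Hv. destruct (classic (le a (h x0 v))) as [H|H]; [exact H|].
        exfalso. exact (HD3 v Hv (h x0 v) (Hl _) H eq_refl). }
      set (g := fun z (c : S' z) => proj1_sig (constructive_indefinite_description _ (h_surj Hs _ (e z c)))).
      assert (Hg : forall z c, h z (g z c) = e z c).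
      { intros z c; unfold g; destruct (constructive_indefinite_description _ _); assumption. }
      set (psi := compH (flat m (disc S)) (Mmap m (discHomTo (A:=MS m S) g)) : Hom (MS m S') (MS m S)).
      assert (Hpsi : free_morphism psi).
      { intros z s. unfold psi; simpl. rewrite <- flat_nat, flat_flat, Mmap_comp'. reflexivity. }
      eapply Ldef_ext; [|exact (Vinv S' S psi Hpsi x0 _ HD)].
      intro w. cbv beta. pose proof Hs as [Hmor _]. rewrite (inv_gen Hpsi B h Hmor).
      rewrite (Mmap_ext m (discHomTo (A:=B) (fun z c => h z (psi z (sing m (disc S') z c)))) (discHomTo e) x0 w). reflexivity.
      intros z c. simpl. rewrite <- (sing_nat m (discHomTo (A:=MS m S) g)), flat_sing. apply Hg.
  - intro H2.
    assert (Hex : forall S x (K : language m S x), Ldef L K ->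
              exists B h, is_syntactic_algebra K B h /\ L_definable_alg L B).
    { intros S x K HK. destruct (Hsyn S x K HK) as [Hle [Hcong _]].
      exists (SynAlg Hle Hcong Hsurj), (qmap _ _ Hle).
      split; [apply SynAlg_syn|]. eapply H2; [exact HK|]. apply SynAlg_syn. }
    split; [|split; [|split; [|split; [|split]]]].
    + intros S x. apply (Hlat S x).
    + intros S x. apply (Hlat S x).
    + intros S x. apply (Hlat S x).
    + intros S x. apply (Hlat S x).
    + intros S G psi Hpsi x K HK.
      destruct (Hex G x K HK) as [B [h [Hs HB]]].
      eapply Ldef_ext; [|exact (union_def Hlat HB S
          (fun z c => h z (psi z (sing m (disc S) z c))) x
          (fun a => exists s0, K s0 /\ h x s0 = a))].
      intro w. pose proof Hs as [Hmor _]. rewrite <- (inv_gen Hpsi B h Hmor).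
      split.
      * intros [a [[s0 [Hk0 E]] Hl']]. subst a. eapply K_up; [exact Hk0|].
        apply (h_le Hs). exact Hl'.
      * intro Hk; exists (h x (psi x w)); split; [exists (psi x w); auto|apply le_refl].
    + intros S x K z p HK.
      destruct (Hex S x K HK) as [B [h [Hs HB]]].
      eapply Ldef_ext; [|exact (union_def Hlat HB S
          (fun z c => h z (sing m (disc S) z c)) z
          (fun a => exists s0, K (plug p s0) /\ h z s0 = a))].
      intro w. cbv beta. rewrite <- (h_gen Hs z w : h z w = api B z (Mmap m (discHomTo (X:=S) (fun z c => h z (sing m (disc S) z c))) z w)).
      split.
      * intros [a [[s0 [Hk0 E]] Hl']]. subst a.
        exact (h_le Hs _ _ _ Hl' p Hk0).
      * intro Hk; exists (h z w); split; [exists w; auto|apply le_refl].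
Qed.
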